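(* Let $X$ and $\Lambda$ be nonempty sets, $f: X\to\mathbb{R}$, and for each $\lambda\in\Lambda$ let $f_\lambda: X\to\mathbb{R}$, such that the feasible set $X_0:=\{x\in X:\ \sup_{\lambda\in\Lambda}f_\lambda(x)\le0\}$ is nonempty, $x^0\in X_0$ satisfies $f(x^0)=\inf_{x\in X_0}f(x)$, and $(f_\lambda(x))_{\lambda\in\Lambda}\in\ell^\infty(\Lambda)$ for every $x\in X$. Then there exist $\rho\ge0$ and $\Phi_0\in\ell^\infty(\Lambda)^*_+$ with $\rho+\Phi_0(\mathbf{1})=1$ such that the function $x\mapsto\rho f(x)+\Phi_0((f_\lambda(x))_{\lambda\in\Lambda})$ attains its infimum on $X$ at $x^0$ and $\Phi_0((f_\lambda(x^0))_{\lambda\in\Lambda})=0$, if and only if the family $(f_\lambda)_{\lambda\in\Lambda}\cup(f-f(x^0))$ is infsup-convex on $X$.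
   Context: $\ell^\infty(\Lambda)$ is the Banach space of bounded real functions on $\Lambda$ (sup-norm), $\ell^\infty(\Lambda)^*_+$ the cone of positive continuous linear functionals on it, and $\mathbf{1}$ the constant function $1$ on $\Lambda$. The family $(f_\lambda)_{\lambda\in\Lambda}\cup(f-f(x^0))$ is the family indexed by $\Lambda\cup\{\mu\}$ ($\mu\notin\Lambda$) whose $\mu$-th member is $f-f(x^0)$. With $\Delta_m:=\{\mathbf t\in\mathbb{R}^m: t_j\ge0,\sum t_j=1\}$, a family $(g_i)_{i\in I}$ of real functions on $X$ is infsup-convex on $X$ if for all $m\ge1$, $\mathbf{t}\in\Delta_m$, $x_1,\dots,x_m\in X$: $\inf_{x\in X}\sup_{i\in I}g_i(x)\le\sup_{i\in I}\sum_{j=1}^m t_j g_i(x_j)$. *)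

(* Defs.v *)
From mathcomp Require Import all_boot all_order all_algebra.
From mathcomp Require Import all_classical all_reals ereal.
Set Implicit Arguments. Unset Strict Implicit. Unset Printing Implicit Defensive.
Import Order.TTheory GRing.Theory Num.Theory.
Local Open Scope ring_scope.
Local Open Scope classical_set_scope.

Definition linfty {R : realType} {L : Type} (g : L -> R) : Prop :=
  exists M : R, forall l, `|g l| <= M.

(* Phi is given as a map on all of L -> R; only its values on l^infty(L) matter. *)
Definition pos_dual_linfty {R : realType} {L : Type} (Phi : (L -> R) -> R) : Prop :=
  [/\ (forall (a b : R) (g h : L -> R), linfty g -> linfty h ->
         Phi (fun l => a * g l + b * h l) = a * Phi g + b * Phi h),
      (exists C : R, forall (g : L -> R) (M : R),
         linfty g -> (forall l, `|g l| <= M) -> `|Phi g| <= C * M)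
    & (forall g : L -> R, linfty g -> (forall l, 0 <= g l) -> 0 <= Phi g)].

Definition infsup_convex {R : realType} {I X : Type} (g : I -> X -> R) : Prop :=
  forall (m : nat) (t : 'I_m -> R) (xs : 'I_m -> X),
    (0 < m)%N -> (forall j, 0 <= t j) -> \sum_(j < m) t j = 1 ->
    (ereal_inf [set ereal_sup [set (g i x)%:E | i in [set: I]] | x in [set: X]]
      <= ereal_sup [set (\sum_(j < m) t j * g i (xs j))%:E | i in [set: I]])%E.

(* the family (f_l)_{l in L} u (f - f x0), indexed by option L (None = mu) *)
Definition adjoin_family {R : realType} {L X : Type}
  (fl : L -> X -> R) (f : X -> R) (x0 : X) : option L -> X -> R :=
  fun o x => match o with Some l => fl l x | None => f x - f x0 end.

Definition feasible {R : realType} {L X : Type} (fl : L -> X -> R) : set X :=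
  [set x | (ereal_sup [set (fl l x)%:E | l in [set: L]] <= 0)%E].

(* Main.v *)
Require Import Defs.
From mathcomp Require Import all_boot all_order all_algebra.
From mathcomp Require Import all_classical all_reals ereal.
From mathcomp Require Import lra.
Import Order.TTheory GRing.Theory Num.Theory.
Local Open Scope ring_scope.
Local Open Scope classical_set_scope.

Set Implicit Arguments.
Unset Strict Implicit.
Section HB.
Variables (R : realType) (V : lmodType R) (B : set V) (q : V -> R) (K : set V).
Hypothesis HBlin : forall a b x y, B x -> B y -> B (a *: x + b *: y).
Hypothesis HB0 : B 0.
Hypothesis Hqadd : forall x y, B x -> B y -> q (x + y) <= q x + q y.
Hypothesis Hqhom : forall s x, 0 < s -> B x -> q (s *: x) = s * q x.
Hypothesis HKB : forall k, K k -> B k.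
Hypothesis HK0 : K 0.
Hypothesis HKadd : forall x y, K x -> K y -> K (x + y).
Hypothesis HKscale : forall s x, 0 < s -> K x -> K (s *: x).
Hypothesis Hpos : forall k, K k -> 0 <= q k.

Lemma BD x y : B x -> B y -> B (x + y).
Proof. by move=> bx by_; have := HBlin 1 1 bx by_; rewrite !scale1r. Qed.
Lemma BZ s x : B x -> B (s *: x).
Proof. by move=> bx; have := HBlin s 0 bx HB0; rewrite scaler0 addr0. Qed.
Lemma BN x : B x -> B (- x).
Proof. by move=> bx; have := BZ (-1) bx; rewrite scaleN1r. Qed.
Lemma BB x y : B x -> B y -> B (x - y).
Proof. by move=> bx by_; apply: BD => //; apply: BN. Qed.

Definition good (G : set (V * R)) :=
 [/\ forall x a, G (x,a) -> B x,
     forall x a b, G (x,a) -> G (x,b) -> a = b,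
     forall x a y b, G (x,a) -> G (y,b) -> G (x + y, a + b),
     forall s x a, G (x,a) -> G (s *: x, s * a)
   & forall x a k, G (x,a) -> K k -> a <= q (x + k)].

Lemma good_chain (F : set (set (V * R))) :
  F `<=` good -> total_on F subset -> good (\bigcup_(X in F) X).
Proof.
move=> Fg tot; split.
- by move=> x a [G FG Gxa]; case: (Fg _ FG) => H _ _ _ _; exact: H Gxa.
- move=> x a b [G1 F1 G1a] [G2 F2 G2b].
  have [s12|s21] := tot _ _ F1 F2.
  + case: (Fg _ F2) => _ H _ _ _; apply: H G2b; exact: s12.
  + case: (Fg _ F1) => _ H _ _ _; apply: H G1a _; exact: s21.
- move=> x a y b [G1 F1 G1a] [G2 F2 G2b].
  have [s12|s21] := tot _ _ F1 F2.
  + exists G2 => //; case: (Fg _ F2) => _ _ H _ _; apply: H G2b; exact: s12.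
  + exists G1 => //; case: (Fg _ F1) => _ _ H _ _; apply: H G1a _; exact: s21.
- move=> s x a [G FG Ga]; exists G => //.
  by case: (Fg _ FG) => _ _ _ H _; apply: H.
- by move=> x a k [G FG Ga] Kk; case: (Fg _ FG) => _ _ _ _ H; apply: H.
Qed.

Section Ext.
Variables (A : set (V * R)) (gA : good A) (A0 : A (0,0)) (y : V) (By : B y)
  (ny : ~ exists a, A (y,a)).

Let S := [set r | exists x a k, [/\ A (x,a), K k & r = a - q (x - y + k)]].
Let c := sup S.

Lemma S_bound x a k x' a' k' : A (x,a) -> K k -> A (x',a') -> K k' ->
  a - q (x - y + k) <= q (x' + y + k') - a'.
Proof.
case: gA => AB _ Aadd _ Adom => Ax Kk Ax' Kk'.
have := Adom _ _ _ (Aadd _ _ _ _ Ax Ax') (HKadd Kk Kk').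
have -> : x + x' + (k + k') = (x - y + k) + (x' + y + k').
  by rewrite !addrA (addrAC (x - y) k x') (addrAC (x - y + x') k y) (addrAC (x - y) x' y) subrK.
move=> h; have := Hqadd (BD (BB (AB _ _ Ax) By) (HKB Kk)) (BD (BD (AB _ _ Ax') By) (HKB Kk')).
lra.
Qed.

Lemma hasS : has_sup S.
Proof.
split; first by exists (0 - q (0 - y + 0)), 0, 0, 0.
exists (q (0 + y + 0) - 0) => r [x [a [k [Ax Kk ->]]]].
exact: S_bound.
Qed.

Lemma cL x a k : A (x,a) -> K k -> a - q (x - y + k) <= c.
Proof. by move=> Ax Kk; apply: sup_upper_bound hasS _ _; exists x, a, k. Qed.

Lemma cU x a k : A (x,a) -> K k -> c <= q (x + y + k) - a.
Proof.
move=> Ax Kk; apply: ge_sup; first by case: hasS.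
by move=> r [x1 [a1 [k1 [Ax1 Kk1 ->]]]]; exact: S_bound.
Qed.

Definition G' : set (V * R) :=
  [set p | exists x a t, A (x,a) /\ p = (x + t *: y, a + t * c)].

Lemma goodG' : good G'.
Proof.
case: gA => AB Afun Aadd Asc Adom; split.
- move=> z b [x [a [t [Ax [-> _]]]]]; apply: BD; first exact: AB Ax.
  exact: BZ.
- move=> z b1 b2 [x [a [t [Ax [E1 ->]]]]] [x' [a' [t' [Ax' [E2 ->]]]]].
  have E : x + t *: y = x' + t' *: y by rewrite -E1 -E2.
  have [tt'|ntt'] := eqVneq t t'.
    subst t'; have xx' : x = x' by apply: (addIr (t *: y)).
    by subst x'; rewrite (Afun _ _ _ Ax Ax').
  exfalso; apply: ny.
  have e : (t - t') *: y = x' - x.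
    apply/eqP; rewrite scalerBl subr_eq addrAC -E addrAC subrr add0r.
    exact: eqxx.
  have Ad : A (x' - x, a' - a).
    apply: Aadd => //; have := Asc (-1) _ _ Ax; by rewrite scaleN1r mulN1r.
  exists ((t - t')^-1 * (a' - a)).
  have -> : y = (t - t')^-1 *: (x' - x).
    by rewrite -e scalerA mulVf ?subr_eq0 // scale1r.
  exact: Asc.
- move=> z1 b1 z2 b2 [x [a [t [Ax [-> ->]]]]] [x' [a' [t' [Ax' [-> ->]]]]].
  exists (x + x'), (a + a'), (t + t'); split; first exact: Aadd.
  by congr (_, _); [rewrite scalerDl addrACA | rewrite mulrDl addrACA].
- move=> s z b [x [a [t [Ax [-> ->]]]]].
  exists (s *: x), (s * a), (s * t); split; first exact: Asc.
  by congr (_, _); [rewrite scalerDr scalerA | rewrite mulrDr mulrA].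
- move=> z b k [x [a [t [Ax [-> ->]]]]] Kk.
  have Bx := AB _ _ Ax.
  have BQ : B (x + t *: y + k) by apply: BD; [apply: BD => //; exact: BZ|exact: HKB].
  have [t0|tneg|tpos] := ltgtP t 0; last first.
  + by subst t; rewrite scale0r addr0 mul0r addr0; exact: Adom Ax Kk.
  + set u := t^-1.
    have u0 : 0 < u by rewrite invr_gt0.
    have := cU (Asc u _ _ Ax) (HKscale u0 Kk).
    have -> : u *: x + y + u *: k = u *: (x + t *: y + k).
      by rewrite !scalerDr scalerA mulVf ?gt_eqF // scale1r.
    rewrite Hqhom // => h.
    have h2 : t * c <= t * (u * q (x + t *: y + k) - u * a) by rewrite ler_pM2l.
    move: h2; rewrite mulrBr !mulrA mulfV ?gt_eqF // !mul1r; lra.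
  + set u := (- t)^-1.
    have u0 : 0 < u by rewrite invr_gt0 oppr_gt0.
    have := cL (Asc u _ _ Ax) (HKscale u0 Kk).
    have -> : u *: x - y + u *: k = u *: (x + t *: y + k).
      by rewrite !scalerDr scalerA /u invrN mulNr mulVf ?lt_eqF // scaleN1r.
    rewrite Hqhom // => h.
    have h2 : (- t) * (u * a - u * q (x + t *: y + k)) <= (- t) * c.
      by rewrite ler_pM2l // oppr_gt0.
    move: h2; rewrite mulrBr !mulrA /u mulfV ?oppr_eq0 ?lt_eqF // !mul1r; lra.
Qed.

Lemma AG' : A `<` G'.
Proof.
split.
  by move=> [x a] Ax; exists x, a, 0; rewrite scale0r mul0r !addr0.
move=> sub; apply: ny; exists c.
by apply: sub; exists 0, 0, 1; rewrite scale1r mul1r !add0r.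
Qed.
End Ext.

Lemma HB_thm : exists (phi : V -> R),
  (forall a b x y, B x -> B y -> phi (a *: x + b *: y) = a * phi x + b * phi y) /\
  (forall x k, B x -> K k -> phi x <= q (x + k)).
Proof.
have [A [gA Amax]] := @Zorn_bigcup _ good good_chain.
have A0 : A (0,0).
  apply: contrapT => nA0.
  apply: (Amax (A `|` [set (0,0)])).
    split; first by move=> p Ap; left.
    by move=> sub; apply: nA0; apply: sub; right.
  case: gA => AB Afun Aadd Asc Adom; split.
  - by move=> x a [/AB //|[-> _]].
  - move=> x a b [Ha|Ha] [Hb|Hb].
    + exact: Afun Ha Hb.
    + case: Hb => Ex ->; subst x; move: Ha (Ha) => /(Asc 0); rewrite scale0r mul0r => H1 H2.
      exact: Afun H2 H1.
    + case: Ha => Ex ->; subst x; move: Hb (Hb) => /(Asc 0); rewrite scale0r mul0r => H1 H2.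
      exact: Afun H1 H2.
    + by case: Ha => _ ->; case: Hb => _ ->.
  - move=> x a y b [Ha|[-> ->]] [Hb|[-> ->]].
    + by left; exact: Aadd.
    + by left; rewrite !addr0.
    + by left; rewrite !add0r.
    + by right; rewrite !addr0.
  - move=> s x a [Ha|[-> ->]]; first by left; exact: Asc.
    by right; rewrite scaler0 mulr0.
  - move=> x a k [Ha|[-> ->]] Kk; first exact: Adom Ha Kk.
    by rewrite add0r; exact: Hpos.
have dom y : B y -> exists a, A (y,a).
  move=> By; apply: contrapT => ny.
  exact: (Amax _ (AG' A0 ny) (goodG' gA A0 By ny)).
pose phi y := xget 0 (fun a => A (y,a)).
have Aphi y : B y -> A (y, phi y) by move=> By; exact: (xgetPex 0 (dom y By)).
case: gA => AB Afun Aadd Asc Adom.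
exists phi; split.
- move=> a b x y Bx By; apply: (Afun _ _ _ (Aphi _ (HBlin a b Bx By))).
  by apply: Aadd; apply: Asc; apply: Aphi.
- by move=> x k Bx Kk; apply: Adom => //; exact: Aphi.
Qed.
End HB.


Set Strict Implicit.
Unset Implicit Arguments.
Lemma linfty_lin (R : realType) (L : Type) (a b : R) (g h : L -> R) :
  linfty g -> linfty h -> linfty (fun l => a * g l + b * h l).
Proof.
move=> [Mg Hg] [Mh Hh]; exists (`|a| * Mg + `|b| * Mh) => l.
apply: le_trans (ler_normD _ _) _; rewrite !normrM.
by apply: lerD; apply: ler_wpM2l.
Qed.

Lemma linfty_cst (R : realType) (L : Type) (r : R) : linfty (fun _ : L => r).
Proof. by exists `|r|. Qed.

Lemma Phi_sum (R : realType) (L : Type) (Phi : (L -> R) -> R) :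
  pos_dual_linfty Phi -> forall n (t : 'I_n -> R) (G : 'I_n -> L -> R),
  (forall j, linfty (G j)) ->
  linfty (fun l => \sum_(j < n) t j * G j l) /\
  Phi (fun l => \sum_(j < n) t j * G j l) = \sum_(j < n) t j * Phi (G j).
Proof.
move=> [Hlin _ _]; elim=> [|n IH] t G HG.
  have -> : (fun l => \sum_(j < 0) t j * G j l) =
            (fun l => 0 * (fun _ => 0) l + 0 * (fun _ => 0) l).
    by apply/funext => l; rewrite big_ord0 mul0r addr0.
  rewrite big_ord0; split; first by apply: linfty_lin; exact: linfty_cst.
  by rewrite Hlin ?mul0r ?addr0 //; exact: linfty_cst.
have [IH1 IH2] := IH (fun j => t (widen_ord (leqnSn n) j))
                     (fun j => G (widen_ord (leqnSn n) j)) (fun j => HG _).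
have -> : (fun l => \sum_(j < n.+1) t j * G j l) =
   (fun l => 1 * (fun l => \sum_(j < n) t (widen_ord (leqnSn n) j) * G (widen_ord (leqnSn n) j) l) l
      + t ord_max * G ord_max l).
  by apply/funext => l; rewrite big_ord_recr /= mul1r.
split; first exact: linfty_lin.
by rewrite Hlin // IH2 mul1r big_ord_recr.
Qed.

Lemma Phi_le (R : realType) (L : Type) (Phi : (L -> R) -> R) (g : L -> R) (r : R) :
  pos_dual_linfty Phi -> linfty g -> (forall l, g l <= r) ->
  Phi g <= r * Phi (fun _ => 1).
Proof.
move=> [Hlin _ Hpos] lg gr.
have := Hpos (fun l => r * (fun _ => 1) l + (-1) * g l).
rewrite Hlin //; last exact: linfty_cst.
rewrite mulN1r subr_ge0; apply; first by apply: linfty_lin => //; exact: linfty_cst.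
by move=> l; rewrite mulr1 mulN1r subr_ge0.
Qed.

Lemma forward (R : realType) (X L : Type) (f : X -> R) (fl : L -> X -> R) (x0 : X) :
  feasible fl x0 ->
  (forall x, linfty (fun l => fl l x)) ->
  (exists (rho : R) (Phi0 : (L -> R) -> R),
      [/\ 0 <= rho, pos_dual_linfty Phi0, rho + Phi0 (fun _ => 1) = 1,
          (forall x, rho * f x0 + Phi0 (fun l => fl l x0)
                     <= rho * f x + Phi0 (fun l => fl l x))
        & Phi0 (fun l => fl l x0) = 0]) ->
  infsup_convex (adjoin_family fl f x0).
Proof.
move=> feas lin [rho [Phi [r0 Hpd H1 Hopt Hz]]] m t xs m0 t0 t1.
apply: (@le_trans _ _ 0%E).
  apply: ge_ereal_inf; exists (ereal_sup [set (adjoin_family fl f x0 i x0)%:E | i in [set: option L]]).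
    by exists x0.
  apply: ge_ereal_sup => _ [[l|] _ <-] /=.
    by apply: le_trans feas; apply: ereal_sup_ubound; exists l.
  by rewrite subrr.
rewrite leNgt; apply/negP.
set s := ereal_sup _.
have ub := @ereal_sup_ubound _ [set (\sum_(j < m) t j * adjoin_family fl f x0 i (xs j))%:E | i in [set: option L]].
rewrite -/s in ub.
have hN := ub _ (ex_intro2 _ _ None I erefl).
have hS l := ub _ (ex_intro2 _ _ (Some l) I erefl).
move: hN hS; clear ub; clearbody s; case: s => [r| |] //=.
rewrite !lee_fin lte_fin => hN hS rneg.
have key j : rho * f x0 <= rho * f (xs j) + Phi (fun l => fl l (xs j)).
  by have := Hopt (xs j); rewrite Hz addr0.
have hS' l : \sum_(j < m) t j * fl l (xs j) <= r by rewrite -lee_fin; exact: hS.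
have s1 : rho * f x0 <= \sum_(j < m) t j * (rho * f (xs j) + Phi (fun l => fl l (xs j))).
  rewrite -[X in X <= _]mul1r -t1 mulr_suml; apply: ler_sum => j _.
  by apply: ler_wpM2l => //; exact: key.
have hP := @Phi_sum _ _ _ Hpd m t (fun j => fun l => fl l (xs j)) (fun j => lin (xs j)).
have hle := @Phi_le _ _ _ _ r Hpd hP.1 hS'.
rewrite hP.2 in hle.
have e2 : \sum_(j < m) t j * f x0 = f x0 by rewrite -mulr_suml t1 mul1r.
have e3 : \sum_(j < m) t j * (f (xs j) - f x0) =
          \sum_(j < m) t j * f (xs j) - \sum_(j < m) t j * f x0.
  by rewrite -sumrB; apply: eq_bigr => j _; rewrite mulrBr.
rewrite e3 e2 in hN.
have e4 : \sum_(j < m) t j * (rho * f (xs j) + Phi (fun l => fl l (xs j))) =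
    rho * \sum_(j < m) t j * f (xs j) + \sum_(j < m) t j * Phi (fun l => fl l (xs j)).
  by rewrite mulr_sumr -big_split; apply: eq_bigr => j _ /=; rewrite mulrDr mulrCA.
rewrite e4 in s1.
have h5 : rho * \sum_(j < m) t j * f (xs j) <= rho * (r + f x0).
  by apply: ler_wpM2l => //; lra.
rewrite mulrDr in h5.
have h6 : r * rho + r * Phi (fun _ => 1) = r by rewrite -mulrDr H1 mulr1.
lra.
Qed.

Set Implicit Arguments.
Section Rev.
Variables (R : realType) (X L : Type) (xi : X) (l0 : L)
  (f : X -> R) (fl : L -> X -> R) (x0 : X).
Hypothesis feas : feasible fl x0.
Hypothesis opt : (f x0)%:E = ereal_inf [set (f x)%:E | x in feasible fl].
Hypothesis lin : forall x, linfty (fun l => fl l x).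

Let g := adjoin_family fl f x0.

Lemma infpos : (0 <= ereal_inf [set ereal_sup [set (g i x)%:E | i in [set: option L]]
                                  | x in [set: X]])%E.
Proof.
apply: le_ereal_inf_tmp => _ [x _ <-].
have [fx|nfx] := pselect (feasible fl x).
  have : ((f x0)%:E <= (f x)%:E)%E by rewrite opt; apply: ereal_inf_lbound; exists x.
  rewrite lee_fin => h; apply: (@le_trans _ _ ((f x - f x0)%:E)).
    by rewrite lee_fin subr_ge0.
  by apply: ereal_sup_ubound; exists None.
have : (0 < ereal_sup [set (fl l x)%:E | l in [set: L]])%E by rewrite ltNge; apply/negP.
move=> /lt_le_trans h; apply/ltW/h; apply: ereal_sup_le => _ [l _ <-].
by exists (Some l).
Qed.

Definition Vt := option L -> R^o.
Definition Bv (h : Vt) := exists M : R, forall o, `|(h o : R)| <= M.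
Definition qv (h : Vt) : R := sup [set (h o : R) | o in [set: option L]].

Lemma evD (x y : Vt) o : ((x + y) o : R) = (x o : R) + (y o : R). Proof. by []. Qed.
Lemma evZ (a : R) (x : Vt) o : ((a *: x) o : R) = a * (x o : R). Proof. by []. Qed.
Lemma evN (x : Vt) o : ((- x) o : R) = - (x o : R). Proof. by []. Qed.
Lemma ev0 o : ((0 : Vt) o : R) = 0. Proof. by []. Qed.
Lemma evsum (I : Type) (s : seq I) (F : I -> Vt) o :
  ((\sum_(i <- s) F i) o : R) = \sum_(i <- s) (F i o : R).
Proof.
elim: s => [|i s IH]; first by rewrite !big_nil.
by rewrite !big_cons evD IH.
Qed.

Lemma q_has h : Bv h -> has_sup [set (h o : R) | o in [set: option L]].
Proof.
move=> [M HM]; split; first by exists (h None), None.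
by exists M => _ [o _ <-]; apply: le_trans (ler_norm _) (HM o).
Qed.

Lemma q_ub h o : Bv h -> (h o : R) <= qv h.
Proof. by move=> Bh; apply: (sup_upper_bound (q_has Bh)); exists o. Qed.

Lemma q_le h (M : R) : (forall o, (h o : R) <= M) -> qv h <= M.
Proof.
move=> hM; apply: ge_sup; first by exists (h None), None.
by move=> _ [o _ <-].
Qed.

Lemma Bv_lin a b x y : Bv x -> Bv y -> Bv (a *: x + b *: y).
Proof.
move=> [Mx Hx] [My Hy]; exists (`|a| * Mx + `|b| * My) => o.
rewrite evD !evZ; apply: le_trans (ler_normD _ _) _; rewrite !normrM.
by apply: lerD; apply: ler_wpM2l.
Qed.

Lemma Bv0 : Bv 0. Proof. by exists 0 => o; rewrite ev0 normr0. Qed.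

Definition Gx (x : X) : Vt := fun o => g o x.

Definition Kv (k : Vt) := exists s : seq (R * X),
  all (fun p => 0 < p.1) s /\ k = \sum_(p <- s) p.1 *: Gx p.2.

Lemma BGx x : Bv (Gx x).
Proof.
have [M HM] := lin x.
have M0 : 0 <= M by apply: le_trans (HM l0).
exists (`|f x - f x0| + M) => -[l|] /=.
  by apply: le_trans (HM l) _; rewrite lerDr normr_ge0.
by apply: (@le_trans _ _ (`|f x - f x0|)); rewrite // lerDl.
Qed.

Lemma KB k : Kv k -> Bv k.
Proof.
move=> [s [_ ->]]; elim: s => [|p s IH]; first by rewrite big_nil; exact: Bv0.
rewrite big_cons; have := Bv_lin p.1 1 (BGx p.2) IH; by rewrite scale1r.
Qed.

Lemma K0 : Kv 0. Proof. by exists [::]; rewrite big_nil. Qed.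

Lemma Kadd x y : Kv x -> Kv y -> Kv (x + y).
Proof.
move=> [s1 [a1 ->]] [s2 [a2 ->]]; exists (s1 ++ s2).
by rewrite all_cat a1 a2 big_cat.
Qed.

Lemma Kscale c x : 0 < c -> Kv x -> Kv (c *: x).
Proof.
move=> c0 [s [a ->]]; exists [seq (c * p.1, p.2) | p <- s]; split.
  by rewrite all_map; apply: sub_all a => p /= hp; apply: mulr_gt0.
by rewrite big_map scaler_sumr; apply: eq_bigr => p _ /=; rewrite scalerA.
Qed.

Lemma sum_pos (s : seq (R * X)) : all (fun p => 0 < p.1) s -> 0 <= \sum_(p <- s) p.1.
Proof.
elim: s => [|p s IH]; first by rewrite big_nil.
by rewrite big_cons /= => /andP[p0 /IH h]; apply: addr_ge0 => //; exact: ltW.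
Qed.

Hypothesis isc : infsup_convex g.

Lemma Kpos k : Kv k -> 0 <= qv k.
Proof.
move=> [s0 [a ->]] {k}.
case: s0 a => [|p s'] a.
  by rewrite big_nil; apply: le_trans (q_ub None Bv0); rewrite ev0.
set s := p :: s' in a *.
set S := \sum_(p <- s) p.1.
have S0 : 0 < S.
  rewrite /S /s big_cons; move: a => /= /andP[p0 /sum_pos h]; lra.
have hn (F : R * X -> R) : \sum_(j < size s) F (nth (0,xi) s j) = \sum_(p <- s) F p.
  by rewrite (big_nth (0,xi)) big_mkord.
move/(all_nthP (0,xi)): (a) => an.
have Hc := @isc (size s) (fun j => (nth (0,xi) s j).1 / S) (fun j => (nth (0,xi) s j).2) erefl.
have Hle := infpos.
have Hc' : (0 <= ereal_sup [set (\sum_(j < size s) (nth (0,xi) s j).1 / S * g i (nth (0,xi) s j).2)%:E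
               | i in [set: option L]])%E.
  apply: le_trans Hle _; apply: Hc.
    by move=> j; apply: divr_ge0; [exact/ltW/an | exact: ltW].
  by rewrite -mulr_suml hn mulfV // gt_eqF.
rewrite leNgt; apply/negP => qneg.
have : (ereal_sup [set (\sum_(j < size s) (nth (0,xi) s j).1 / S * g i (nth (0,xi) s j).2)%:E
               | i in [set: option L]] <= (S^-1 * qv (\sum_(p <- s) p.1 *: Gx p.2))%:E)%E.
  apply: ge_ereal_sup => _ [i _ <-]; rewrite lee_fin.
  have -> : \sum_(j < size s) (nth (0,xi) s j).1 / S * g i (nth (0,xi) s j).2 =
            S^-1 * ((\sum_(p <- s) p.1 *: Gx p.2) i : R).
    rewrite evsum mulr_sumr -hn; apply: eq_bigr => j _.
    by rewrite evZ /Gx mulrA [_ * _^-1]mulrC.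
  rewrite ler_pM2l ?invr_gt0 //; apply: q_ub; apply: KB.
  by exists s.
move=> /(le_trans Hc'); rewrite lee_fin pmulr_rge0 ?invr_gt0 //.
by rewrite leNgt qneg.
Qed.

Lemma qadd x y : Bv x -> Bv y -> qv (x + y) <= qv x + qv y.
Proof. by move=> Bx By; apply: q_le => o; rewrite evD; apply: lerD; exact: q_ub. Qed.

Lemma BvZ s x : Bv x -> Bv (s *: x).
Proof. by move=> Bx; have := Bv_lin s 0 Bx Bv0; rewrite scaler0 addr0. Qed.

Lemma BvN x : Bv x -> Bv (- x).
Proof. by move=> Bx; have := BvZ (-1) Bx; rewrite scaleN1r. Qed.

Lemma qhom s x : 0 < s -> Bv x -> qv (s *: x) = s * qv x.
Proof.
move=> s0 Bx; apply/le_anti/andP; split.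
  by apply: q_le => o; rewrite evZ ler_pM2l //; exact: q_ub.
rewrite -ler_pdivlMl //; apply: q_le => o; rewrite ler_pdivlMl // -evZ.
by apply: q_ub; exact: BvZ.
Qed.

Lemma reverse : exists (rho : R) (Phi0 : (L -> R) -> R),
      [/\ 0 <= rho, pos_dual_linfty Phi0, rho + Phi0 (fun _ => 1) = 1,
          (forall x, rho * f x0 + Phi0 (fun l => fl l x0)
                     <= rho * f x + Phi0 (fun l => fl l x))
        & Phi0 (fun l => fl l x0) = 0].
Proof.
have [phi [plin pdom]] := HB_thm Bv_lin Bv0 qadd qhom KB K0 Kadd Kscale Kpos.
pose eN : Vt := fun o => if o is None then 1 else 0.
pose ext (h : L -> R) : Vt := fun o => if o is Some l then h l else 0.
pose one : Vt := fun _ => 1.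
have Bext h : linfty h -> Bv (ext h).
  move=> [M HM]; exists M => -[l|] /=; first exact: HM.
  by rewrite normr0; apply: le_trans (HM l0).
have BeN : Bv eN by exists 1 => -[l|] /=; rewrite ?normr0 ?normr1.
have Bone : Bv one by exists 1 => o; rewrite /one normr1.
have phiN h : Bv h -> phi (- h) = - phi h.
  move=> Bh; have := plin (-1) 0 h h Bh Bh.
  by rewrite scaleN1r scale0r addr0 mulN1r mul0r addr0.
have phi_ub h M : Bv h -> (forall o, (h o : R) <= M) -> phi h <= M.
  move=> Bh hM; have := pdom h 0 Bh K0; rewrite addr0 => /le_trans; apply.
  exact: q_le.
have phi_pos h : Bv h -> (forall o, 0 <= (h o : R)) -> 0 <= phi h.
  move=> Bh hp; have := phi_ub (- h) 0 (BvN Bh).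
  rewrite phiN // oppr_le0; apply => o; rewrite evN oppr_le0; exact: hp.
have phi_K k : Kv k -> 0 <= phi k.
  move=> Kk; have := pdom (- k) k (BvN (KB Kk)) Kk.
  rewrite addNr (phiN _ (KB Kk)) => h.
  have : qv 0 <= 0 by apply: q_le => o; rewrite ev0.
  move=> h2; have := le_trans h h2; by rewrite oppr_le0.
exists (phi eN), (fun h => phi (ext h)).
have Hlin' a b g1 h1 : linfty g1 -> linfty h1 ->
    phi (ext (fun l => a * g1 l + b * h1 l)) = a * phi (ext g1) + b * phi (ext h1).
  move=> lg lh; rewrite -plin; [|exact: Bext lg|exact: Bext lh]; congr phi; apply/funext => o.
  by rewrite evD !evZ; case: o => [l|] //=; rewrite !mulr0 addr0.
have Gdec x : Gx x = (f x - f x0) *: eN + 1 *: ext (fun l => fl l x).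
  apply/funext => o; rewrite evD !evZ; case: o => [l|] /=.
    by rewrite mulr0 add0r mul1r.
  by rewrite mulr1 mulr0 addr0.
have key x : 0 <= (f x - f x0) * phi eN + phi (ext (fun l => fl l x)).
  have := phi_K (Gx x); rewrite Gdec plin; [|exact: BeN|exact: Bext (lin x)].
  rewrite mul1r; apply.
  exists [:: (1, x)]; split; first by rewrite /= ltr01.
  by rewrite big_cons big_nil addr0 [in RHS]scale1r Gdec.
have Hz : phi (ext (fun l => fl l x0)) = 0.
  apply/le_anti/andP; split; last by have := key x0; rewrite subrr mul0r add0r.
  apply: phi_ub; first exact: Bext.
  case=> [l|] //=; rewrite -lee_fin; apply: le_trans feas.
  by apply: ereal_sup_ubound; exists l.
split.
- by apply: phi_pos => // -[].
- split.
  + exact: Hlin'.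
  + exists 1 => h M lh HM; rewrite mul1r ler_norml.
    have M0 : 0 <= M by apply: le_trans (HM l0).
    apply/andP; split.
      rewrite lerNl -phiN; last exact: Bext.
      apply: phi_ub; first by apply/BvN/Bext.
      case=> [l|] /=; rewrite evN /=; last by rewrite oppr0.
      by have := HM l; rewrite ler_norml => /andP[]; lra.
    apply: phi_ub; first exact: Bext.
    case=> [l|] //=.
    by have := HM l; rewrite ler_norml => /andP[]; lra.
  + by move=> h lh hp; apply: phi_pos; [exact: Bext | case].
- have -> : phi eN + phi (ext (fun _ => 1)) = phi one.
    rewrite -[phi eN]mul1r -[phi (ext _)]mul1r -plin; [|exact: BeN|exact/Bext/linfty_cst].
    congr phi; apply/funext => o; rewrite evD !evZ /one; case: o => [l|] /=.
      by rewrite mulr0 add0r mul1r.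
    by rewrite mulr1 mulr0 addr0.
  apply/le_anti/andP; split; first by apply: phi_ub.
  rewrite -lerN2 -phiN //; apply: phi_ub; first exact: BvN.
  by move=> o; rewrite evN.
- move=> x; rewrite Hz addr0; have := key x; rewrite mulrBl; lra.
- exact: Hz.
Qed.
End Rev.

Unset Implicit Arguments.
Set Strict Implicit.

Theorem theorem4p5 (R : realType) (X L : Type) (xi : X) (l0 : L)
  (f : X -> R) (fl : L -> X -> R) (x0 : X) :
  feasible fl x0 ->
  (f x0)%:E = ereal_inf [set (f x)%:E | x in feasible fl] ->
  (forall x, linfty (fun l => fl l x)) ->
  ((exists (rho : R) (Phi0 : (L -> R) -> R),
      [/\ 0 <= rho, pos_dual_linfty Phi0, rho + Phi0 (fun _ => 1) = 1,
          (forall x, rho * f x0 + Phi0 (fun l => fl l x0)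
                     <= rho * f x + Phi0 (fun l => fl l x))
        & Phi0 (fun l => fl l x0) = 0])
   <-> infsup_convex (adjoin_family fl f x0)).
Proof.
move=> feas opt lin; split.
  by move=> H; exact: (@forward R X L f fl x0 feas lin H).
by move=> H; exact: (@reverse R X L xi l0 f fl x0 feas opt lin H).
Qed.
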